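(* Let $\Sigma$ be a ranked alphabet, $B$ a strong bimonoid and $\mathcal{A}$ a bottom-up deterministic $(\Sigma,B)$-weighted tree automaton. Then $[\![\mathcal{A}]\!]^{\mathrm{init}}=[\![\mathcal{A}]\!]^{\mathrm{run}}$.
   Context: A ranked alphabet is a finite nonempty set $\Sigma$ with a rank map $\mathrm{rk}:\Sigma\to\mathbb{N}$; $\Sigma^{(k)}=\{\sigma\mid \mathrm{rk}(\sigma)=k\}$, and it is assumed that $\Sigma^{(0)}\neq\emptyset$. $T_\Sigma$ is the set of $\Sigma$-trees: the smallest set containing $\Sigma^{(0)}$ and containing $\sigma(\xi_1,\dots,\xi_k)$ whenever $k\ge 1$, $\sigma\in\Sigma^{(k)}$, $\xi_1,\dots,\xi_k\in T_\Sigma$ (for $k=0$ we write $\sigma$ for $\sigma()$). Positions: $\mathrm{pos}(\alpha)=\{\varepsilon\}$ for $\alpha\in\Sigma^{(0)}$, $\mathrm{pos}(\sigma(\xi_1,\dots,\xi_k))=\{\varepsilon\}\cup\{iv\mid i\in[k], v\in\mathrm{pos}(\xi_i)\}$. A strong bimonoid $(B,\oplus,\otimes,\mathbb{0},\mathbb{1})$ consists of a commutative monoid $(B,\oplus,\mathbb{0})$ and a (not necessarily commutative) monoid $(B,\otimes,\mathbb{1})$ with $\mathbb{0}\neq\mathbb{1}$ and $b\otimes\mathbb{0}=\mathbb{0}\otimes b=\mathbb{0}$ for all $b$; no distributivity is assumed. $\bigotimes_{i=1}^k a_i=a_1\otimes\cdots\otimes a_k$ in this order ($\mathbb{1}$ if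 $k=0$), and $\bigoplus$ over a finite index set is the iterated sum ($\mathbb{0}$ if empty). A $(\Sigma,B)$-weighted tree automaton (wta) is $\mathcal{A}=(Q,\delta,F)$ with $Q$ a finite nonempty set, $\delta=(\delta_k)_{k\in\mathbb{N}}$ with $\delta_k:Q^k\times\Sigma^{(k)}\times Q\to B$ (written $\delta_k(q_1\dots q_k,\sigma,q)$), and $F:Q\to B$. The vector algebra of $\mathcal{A}$ is the $\Sigma$-algebra $(B^Q,\delta_{\mathcal{A}})$ with $\delta_{\mathcal{A}}(\sigma)(v_1,\dots,v_k)_q=\bigoplus_{q_1,\dots,q_k\in Q}\big(\bigotimes_{i=1}^k (v_i)_{q_i}\big)\otimes\delta_k(q_1\dots q_k,\sigma,q)$. Let $h_{\mathrm{V}(\mathcal{A})}:T_\Sigma\to B^Q$ be defined by $h_{\mathrm{V}(\mathcal{A})}(\sigma(\xi_1,\dots,\xi_k))=\delta_{\mathcal{A}}(\sigma)(h_{\mathrm{V}(\mathcal{A})}(\xi_1),\dots,h_{\mathrm{V}(\mathcal{A})}(\xi_k))$. The initial algebra semantics is $[\![\mathcal{A}]\!]^{\mathrm{init}}(\xi)=\bigoplus_{q\in Q}h_{\mathrm{V}(\mathcal{A})}(\xi)_q\otimes F_q$. A run of $\mathcal{A}$ on $\xi$ is a map $\rho:\mathrm{pos}(\xi)\to Q$; $R_{\mathcal{A}}(\xi)$ is the set of runs on $\xi$; $\rho|_i$ is the run on $\xi_i$ given by $\rho|_i(w)=\rho(iw)$. For $\xi=\sigma(\xi_1,\dots,\xi_k)$,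 $\mathrm{wt}_{\mathcal{A}}(\rho)=\big(\bigotimes_{i=1}^k\mathrm{wt}_{\mathcal{A}}(\rho|_i)\big)\otimes\delta_k(\rho(1)\dots\rho(k),\sigma,\rho(\varepsilon))$. The run semantics is $[\![\mathcal{A}]\!]^{\mathrm{run}}(\xi)=\bigoplus_{\rho\in R_{\mathcal{A}}(\xi)}\mathrm{wt}_{\mathcal{A}}(\rho)\otimes F_{\rho(\varepsilon)}$. $\mathcal{A}$ is bottom-up deterministic if for all $k$, $\sigma\in\Sigma^{(k)}$, $q_1,\dots,q_k\in Q$ there is at most one $q\in Q$ with $\delta_k(q_1\dots q_k,\sigma,q)\neq\mathbb{0}$. *)

(* Defs.v *)
From mathcomp Require Import all_boot.
Set Implicit Arguments. Unset Strict Implicit. Unset Printing Implicit Defensive.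

(* Strong bimonoid: commutative monoid (add, zero), monoid (mul, one),
   zero <> one, zero absorbing for mul; no distributivity. *)
Record strong_bimonoid := StrongBimonoid {
  sb_car :> Type;
  sb_add : sb_car -> sb_car -> sb_car;
  sb_mul : sb_car -> sb_car -> sb_car;
  sb_zero : sb_car;
  sb_one : sb_car;
  sb_addA : associative sb_add;
  sb_addC : commutative sb_add;
  sb_add0r : left_id sb_zero sb_add;
  sb_mulA : associative sb_mul;
  sb_mul1r : left_id sb_one sb_mul;
  sb_mulr1 : right_id sb_one sb_mul;
  sb_mul0r : left_zero sb_zero sb_mul;
  sb_mulr0 : right_zero sb_zero sb_mul;
  sb_nontriv : sb_zero <> sb_one }.

Inductive tree (S : Type) := Node of S & seq (tree S).
Arguments Node {S} _ _.

Section Defs.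
Variables (Sigma : finType) (rk : Sigma -> nat).

Fixpoint wf_tree (t : tree Sigma) : bool :=
  let: Node s ts := t in (size ts == rk s) && all wf_tree ts.

(* positions (1-based child indices) *)
Fixpoint pos (t : tree Sigma) : seq (seq nat) :=
  let: Node _ ts := t in
  [::] :: (fix aux (i : nat) (us : seq (tree Sigma)) :=
             match us with
             | [::] => [::]
             | u :: us' => map (cons i) (pos u) ++ aux i.+1 us'
             end) 1 ts.

Lemma root_in_pos (t : tree Sigma) : [::] \in pos t.
Proof. by case: t => s ts /=; rewrite in_cons eqxx. Qed.

Variables (B : strong_bimonoid) (Q : finType).
Variables (delta : seq Q -> Sigma -> Q -> B) (F : Q -> B).
(* delta qs sigma q stands for delta_k(q1...qk, sigma, q); it is only ever
   used / constrained for size qs = rk sigma. *)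

Local Notation "a (+) b" := (sb_add a b) (at level 50, left associativity).
Local Notation "a (x) b" := (sb_mul a b) (at level 40, left associativity).

Definition vec_op (s : Sigma) (vs : seq (Q -> B)) (q : Q) : B :=
  \big[@sb_add B/sb_zero B]_(qs : (size vs).-tuple Q)
     ((\big[@sb_mul B/sb_one B]_(p <- zip vs qs) p.1 p.2) (x) delta qs s q).

Fixpoint hV (t : tree Sigma) : Q -> B :=
  let: Node s ts := t in vec_op s (map hV ts).

Definition init_sem (t : tree Sigma) : B :=
  \big[@sb_add B/sb_zero B]_(q : Q) (hV t q (x) F q).

(* weight of a run given as a map from positions to states; the run on the
   i-th subtree is rho|_i (w) = rho (i w) *)
Fixpoint wt (t : tree Sigma) (r : seq nat -> Q) : B :=
  let: Node s ts := t in
  (fix aux (i : nat) (us : seq (tree Sigma)) (r : seq nat -> Q) :=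
     match us with
     | [::] => sb_one B
     | u :: us' => wt u (fun w => r (i :: w)) (x) aux i.+1 us' r
     end) 1 ts r
  (x) delta [seq r [:: i] | i <- iota 1 (size ts)] s (r [::]).

Definition run (t : tree Sigma) := {ffun seq_sub (pos t) -> Q}.

Definition root_pos (t : tree Sigma) : seq_sub (pos t) :=
  SeqSub (root_in_pos t).

Definition run_fun (t : tree Sigma) (rho : run t) : seq nat -> Q :=
  fun w => match (insub w : option (seq_sub (pos t))) with
           | Some p => rho p
           | None => rho (root_pos t)
           end.

Definition run_sem (t : tree Sigma) : B :=
  \big[@sb_add B/sb_zero B]_(rho : run t)
     (wt t (run_fun rho) (x) F (rho (root_pos t))).

Definition bu_deterministic : Prop :=
  forall (s : Sigma) (qs : seq Q), size qs = rk s ->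
  forall q q' : Q, delta qs s q <> sb_zero B -> delta qs s q' <> sb_zero B -> q = q'.

End Defs.

(* Main.v *)
Require Import Defs.
From mathcomp Require Import all_boot.
From HB Require Import structures.
From Stdlib Require Import Classical FunctionalExtensionality.
From Stdlib Require List.
Set Implicit Arguments. Unset Strict Implicit. Unset Printing Implicit Defensive.

Section Proof.
Variables (Sigma : finType) (rk : Sigma -> nat) (B : strong_bimonoid) (Q : finType).
Variables (delta : seq Q -> Sigma -> Q -> B) (F : Q -> B).

Local Notation "a (+) b" := (sb_add a b) (at level 50, left associativity).
Local Notation "a (x) b" := (sb_mul a b) (at level 40, left associativity).
Local Notation zero := (sb_zero B).
Local Notation one := (sb_one B).

Lemma sb_addr0 : right_id zero (@sb_add B).
Proof. by move=> x; rewrite sb_addC sb_add0r. Qed.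
HB.instance Definition _ := Monoid.isComLaw.Build (sb_car B) zero (@sb_add B)
  (@sb_addA B) (@sb_addC B) (@sb_add0r B).

Lemma mul_neq0 (a b : B) : a (x) b <> zero -> a <> zero /\ b <> zero.
Proof.
by move=> H; split=> E; apply: H; rewrite E ?sb_mul0r ?sb_mulr0.
Qed.

Lemma tree_ind' (P : tree Sigma -> Prop) :
  (forall s ts, (forall u, List.In u ts -> P u) -> P (Node s ts)) -> forall t, P t.
Proof.
move=> H.
refine (fix Fx t := match t with Node s ts => H s ts _ end).
refine ((fix G us : forall u, List.In u us -> P u :=
  match us with
  | [::] => fun u (h : List.In u [::]) => False_ind _ h
  | v :: us' => fun u h => match h with
                 | or_introl e => eq_ind v P (Fx v) u e
                 | or_intror h' => G us' u h' end end) ts).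
Qed.

Lemma In_nth (d : tree Sigma) ts j : j < size ts -> List.In (nth d ts j) ts.
Proof. elim: ts j => [|u us IH] [|j] //= H; [left | right; apply IH]; done. Qed.

Fixpoint wts (i : nat) (us : seq (tree Sigma)) (r : seq nat -> Q) : B :=
  match us with
  | [::] => one
  | u :: us' => wt delta u (fun w => r (i :: w)) (x) wts i.+1 us' r
  end.

Lemma wtE s ts r : wt delta (Node s ts) r =
  wts 1 ts r (x) delta [seq r [:: i] | i <- iota 1 (size ts)] s (r [::]).
Proof. by []. Qed.

Fixpoint posl (i : nat) (us : seq (tree Sigma)) : seq (seq nat) :=
  match us with
  | [::] => [::]
  | u :: us' => map (cons i) (pos u) ++ posl i.+1 us'
  end.

Lemma posE s ts : pos (Node s ts) = [::] :: posl 1 ts.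
Proof. by []. Qed.

Lemma mem_posl (d : tree Sigma) i us w : w \in posl i us <->
  exists j w', [/\ j < size us, w' \in pos (nth d us j) & w = (i + j) :: w'].
Proof.
elim: us i w => [|u us IH] i w /=.
  by split=> // -[j [w' [] ]].
rewrite mem_cat; split.
  case/orP.
    by case/mapP=> w' Hw' ->; exists 0, w'; rewrite addn0.
  move=> Hw; case: (proj1 (IH i.+1 w) Hw) => j [w' [Hj Hw' ->]].
  by exists j.+1, w'; rewrite addSnnS.
case=> [[|j]] [w' [Hj Hw' ->]].
  by rewrite addn0 map_f.
apply/orP; right; apply (proj2 (IH i.+1 _)); exists j, w'; by rewrite addSnnS.
Qed.

Lemma wts_neq0 (d : tree Sigma) i us r : wts i us r <> zero ->
  forall j, j < size us -> wt delta (nth d us j) (fun w => r (i + j :: w)) <> zero.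
Proof.
elim: us i => [|u us IH] i //= /mul_neq0 [H1 H2] [|j] Hj /=.
  by rewrite addn0.
by rewrite -addSnnS; apply: IH.
Qed.

Lemma wts_ext (d : tree Sigma) i us r r' :
  (forall j, j < size us -> wt delta (nth d us j) (fun w => r (i + j :: w)) =
                            wt delta (nth d us j) (fun w => r' (i + j :: w))) ->
  wts i us r = wts i us r'.
Proof.
elim: us i => [|u us IH] i //= H.
have := H 0 erefl; rewrite addn0 /= => ->; congr (_ (x) _).
by apply: IH => j Hj; rewrite addSnnS; apply: (H j.+1).
Qed.

Lemma wt_ext_pos t r r' : (forall w, w \in pos t -> r w = r' w) ->
  wt delta t r = wt delta t r'.
Proof.
elim/tree_ind': t r r' => s ts IH r r' H.
rewrite !wtE.
have Hroot : r [::] = r' [::] by apply: H; rewrite posE mem_head.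
rewrite Hroot; congr (_ (x) delta _ s _).
  apply: (wts_ext (d := Node s ts)) => j Hj.
  apply: IH; first exact: In_nth.
  move=> w Hw; apply: H; rewrite posE inE; apply/orP; right.
  by apply/(mem_posl (Node s ts)); exists j, w.
apply/eq_in_map => i; rewrite mem_iota => /andP [H1 H2].
apply: H; rewrite posE inE; apply/orP; right.
apply/(mem_posl (Node s ts)); exists i.-1, [::].
split.
- by move: H2; rewrite add1n; case: i H1.
- by rewrite root_in_pos.
- by rewrite add1n prednK.
Qed.


Lemma collect (X : Type) (dx : X) (P : nat -> X -> Prop) n :
  (forall j, j < n -> exists x, P j x) ->
  exists xs : seq X, size xs = n /\ forall j, j < n -> P j (nth dx xs j).
Proof.
elim: n => [|n IH] H; first by exists [::].
have [xs [Hs Hxs]] : exists xs : seq X, size xs = n /\ forall j, j < n -> P j (nth dx xs j).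
  by apply: IH => j Hj; apply: H; apply: ltnW.
have [x Hx] := H n (ltnSn n).
exists (rcons xs x); rewrite size_rcons Hs; split=> // j Hj.
rewrite nth_rcons Hs; case: ltnP => [Hjn|Hjn]; first exact: Hxs.
have -> : j = n by apply/eqP; rewrite eqn_leq Hjn -ltnS Hj.
by rewrite eqxx.
Qed.

Local Notation prodz l := (\big[@sb_mul B/sb_one B]_(p <- l) p.1 p.2).

Lemma prodz0 (vs : seq (Q -> B)) (qs : seq Q) dv dq j : size qs = size vs ->
  j < size vs -> nth dv vs j (nth dq qs j) = zero -> prodz (zip vs qs) = zero.
Proof.
elim: vs qs j => [|v vs IH] [|q qs] [|j] //= [Hs] Hj H; rewrite big_cons /=.
  by rewrite H sb_mul0r.
by rewrite (IH qs j) // sb_mulr0.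
Qed.

Lemma prodz_wts (d : tree Sigma) (dr : seq nat -> Q) i us rs r : size rs = size us ->
  (forall j, j < size us -> hV delta (nth d us j) (nth dr rs j [::]) =
                             wt delta (nth d us j) (fun w => r (i + j :: w))) ->
  prodz (zip (map (hV delta) us) (map (fun r => r [::]) rs)) = wts i us r.
Proof.
elim: us i rs => [|u us IH] i [|r1 rs] //=; first by rewrite big_nil.
move=> [Hs] H; rewrite big_cons /=.
have := H 0 erefl; rewrite addn0 /= => ->; congr (_ (x) _).
by apply: IH => // j Hj; rewrite addSnnS; exact: (H j.+1 Hj).
Qed.

Definition spec t (r0 : seq nat -> Q) :=
  (forall r, wt delta t r <> zero -> forall w, w \in pos t -> r w = r0 w) /\
  (forall q, hV delta t q = if q == r0 [::] then wt delta t r0 else zero).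

Lemma main_spec (Hdet : bu_deterministic rk delta) (q00 : Q) t :
  wf_tree rk t -> exists r0, spec t r0.
Proof.
elim/tree_ind': t => s ts IH /= /andP [/eqP Hsz Hall].
have Hch : forall j, j < size ts -> exists r, spec (nth (Node s ts) ts j) r.
  move=> j Hj; apply: IH; first exact: In_nth.
  by move/(all_nthP (Node s ts)): Hall; apply.
have [rs [Hrs Hspec]] := collect (fun _ => q00) Hch.
set pq := map (fun r : seq nat -> Q => r [::]) rs.
have [q0 Hq0] : exists q0, forall q, delta pq s q <> zero -> q = q0.
  case: (classic (exists q, delta pq s q <> zero)) => [[q1 Hq1]|Hn].
    exists q1 => q Hq; apply: (Hdet s pq _ q q1) => //.
    by rewrite size_map Hrs.
  by exists q00 => q Hq; exfalso; apply: Hn; exists q.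
pose r0 := fun w : seq nat => match w with
  | [::] => q0 | i :: w' => nth (fun _ => q00) rs i.-1 w' end.
have Hshift : forall j, j < size ts ->
    (fun w => r0 (1 + j :: w)) = nth (fun _ => q00) rs j.
  by move=> j _; apply: functional_extensionality => w; rewrite add1n.
have Hmap : [seq r0 [:: i] | i <- iota 1 (size ts)] = pq.
  apply: (@eq_from_nth _ q00); first by rewrite !size_map size_iota Hrs.
  move=> i; rewrite size_map size_iota => Hi.
  rewrite (nth_map 0) ?size_iota // nth_iota // (nth_map (fun _ => q00)) ?Hrs //.
exists r0; split.
- move=> r Hr w Hw; rewrite wtE in Hr; case/mul_neq0: Hr => H1 H2.
  have Hsub : forall j, j < size ts -> forall w', w' \in pos (nth (Node s ts) ts j) ->
      r (1 + j :: w') = nth (fun _ => q00) rs j w'.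
    move=> j Hj w' Hw'; have [Hi _] := Hspec j Hj.
    apply: (Hi (fun w => r (1 + j :: w))) => //.
    exact: (wts_neq0 H1 Hj).
  have Hm : [seq r [:: i] | i <- iota 1 (size ts)] = pq.
    apply: (@eq_from_nth _ q00); first by rewrite !size_map size_iota Hrs.
    move=> i; rewrite size_map size_iota => Hi.
    rewrite (nth_map 0) ?size_iota // nth_iota // (nth_map (fun _ => q00)) ?Hrs //.
    exact: (Hsub i Hi [::] (root_in_pos _)).
  rewrite Hm in H2; have Hroot := Hq0 _ H2.
  move: Hw; rewrite posE inE => /orP [/eqP -> // | /(mem_posl (Node s ts))].
  case=> j [w' [Hj Hw' ->]]; rewrite Hsub //.
- move=> q.
  have -> : hV delta (Node s ts) q = vec_op delta s (map (hV delta) ts) q by [].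
  rewrite /vec_op.
  set n := size (map (hV delta) ts).
  pose pq0 : n.-tuple Q := insubd (nseq_tuple n q00) pq.
  have Hpq0 : tval pq0 = pq.
    have := val_insubd (nseq_tuple n q00) pq.
    have -> : size pq == n by rewrite /n !size_map Hrs.
    by [].
  rewrite (bigD1 pq0) //= big1 ?sb_addr0; last first.
    move=> qs Hqs.
    have : exists j, j < size ts /\ nth q00 qs j <> nth q00 pq j.
      apply: NNPP => Hn; move/eqP: Hqs; apply; apply: val_inj.
      rewrite /= Hpq0; apply: (@eq_from_nth _ q00).
        by rewrite size_tuple /n !size_map Hrs.
      move=> i Hi.
      have Hi' : i < size ts by rewrite -(size_map (hV delta) ts) -/n -(size_tuple qs).
      by apply: NNPP => Hne; apply: Hn; exists i.
    case=> j [Hj Hne].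
    rewrite (@prodz0 _ _ (hV delta (Node s ts)) q00 j) ?sb_mul0r //.
    + by rewrite size_tuple.
    + by rewrite size_map.
    rewrite (nth_map (Node s ts)) //; have [_ Hii] := Hspec j Hj.
    have Hpj : nth q00 pq j = nth (fun _ => q00) rs j [::].
      by rewrite (nth_map (fun _ => q00)) ?Hrs.
    by rewrite Hii ifN //; apply/eqP; rewrite -Hpj.
  rewrite Hpq0 (@prodz_wts (Node s ts) (fun _ => q00) 1 ts rs r0) ?Hrs //; last first.
    move=> j Hj; rewrite Hshift //; have [_ Hii] := Hspec j Hj.
    by rewrite Hii eqxx.
  change (wts 1 ts r0 (x) delta pq s q = if q == q0 then wts 1 ts r0 (x) delta [seq r0 [:: i] | i <- iota 1 (size ts)] s q0 else zero); rewrite Hmap.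
  case: eqP => [-> // | Hne].
  rewrite (_ : delta pq s q = zero) ?sb_mulr0 //.
  by apply: NNPP => H; apply: Hne; exact: Hq0.
Qed.

Lemma init_run (Hdet : bu_deterministic rk delta) (q00 : Q) t :
  wf_tree rk t -> init_sem delta F t = run_sem delta F t.
Proof.
move=> Hwf; have [r0 [Hi Hii]] := main_spec Hdet q00 Hwf.
rewrite /init_sem (bigD1 (r0 [::])) //= big1 ?sb_addr0; last first.
  by move=> q /negPf Hq; rewrite Hii Hq sb_mul0r.
rewrite Hii eqxx /run_sem.
pose rho0 : run Q t := [ffun p => r0 (ssval p)].
have Hrf : forall w, w \in pos t -> run_fun rho0 w = r0 w.
  move=> w Hw; rewrite /run_fun; case: insubP => [p _ Hp|Hn].
    by rewrite ffunE -Hp.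
  by rewrite Hw in Hn.
rewrite (bigD1 rho0) //= big1 ?sb_addr0.
  by rewrite (wt_ext_pos Hrf) ffunE.
move=> rho Hne.
have : exists p, rho p <> r0 (ssval p).
  apply: NNPP => Hn; move/eqP: Hne; apply; apply/ffunP => p; rewrite ffunE.
  by apply: NNPP => H; apply: Hn; exists p.
case=> p Hp.
rewrite (_ : wt delta t (run_fun rho) = zero) ?sb_mul0r //.
apply: NNPP => Hw; apply: Hp.
have := Hi _ Hw (ssval p) (ssvalP p).
have E : insub (ssval p) = Some p := valK p.
by rewrite /run_fun E.
Qed.

End Proof.

Theorem theorem3p6
  (Sigma : finType) (rk : Sigma -> nat) (Hnullary : exists a : Sigma, rk a = 0)
  (B : strong_bimonoid)
  (Q : finType) (HQ : 0 < #|Q|)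
  (delta : seq Q -> Sigma -> Q -> B) (F : Q -> B)
  (Hdet : bu_deterministic rk delta) :
  forall xi : tree Sigma, wf_tree rk xi ->
    init_sem delta F xi = run_sem delta F xi.
Proof.
move=> xi Hwf; case/card_gt0P: HQ => q00 _.
exact: (init_run F Hdet q00 Hwf).
Qed.
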